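(* Let $\theta=(\mathrm{vec}(W),b^{(v)},b^{(h)})\in\mathbb{R}^d$ collect the parameters of a binary RBM, and consider the $\ell_2$-regularized Contrastive Divergence recursion $\theta_{t+1}=\theta_t+\eta(G_t-\Lambda\theta_t)$, where $G_t$ is the stochastic Contrastive Divergence gradient estimate at step $t$ and $\Lambda=\mathrm{diag}(\psi_W I,\psi_b I,\psi_b I)$ with $\psi_W>0$, $\psi_b>0$. Assume: (1) the minibatch size is finite; (2) visible units are binary; (3) hidden activations lie in $(0,1)$; (4) $0<\eta\psi_{\max}<2$, where $\psi_{\max}=\max(\psi_W,\psi_b)$. Then $\sup_{t\ge0}\|\theta_t\|_2<\infty$.
   Context: The CD gradient estimate $G_t$ consists of differences between minibatch data statistics and negative-phase (model) statistics: for the weights, averaged visible–hidden correlations $v h^\top$ (data minus model), and for the biases, averaged unit activations (data minus model), computed from binary visible vectors and hidden activations/samples in $[0,1]$ as in standard RBM training. $\|\cdot\|_2$ is the Euclidean norm on $\mathbb{R}^d$. The sampling temperature may be fixed or time-varying. *)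

(* Defs.v *)
From HB Require Import structures.
From mathcomp Require Import all_boot all_order all_algebra.
From mathcomp Require Export reals.
Set Implicit Arguments. Unset Strict Implicit. Unset Printing Implicit Defensive.
Import Order.TTheory GRing.Theory Num.Theory.
Local Open Scope ring_scope.

Section RBM.
Variable R : realType.
Variables nv nh : nat.

Definition rbm_dim := (nv * nh + nv + nh)%N.

Definition rbm_vec (W : 'M[R]_(nv, nh)) (bv : 'rV[R]_nv) (bh : 'rV[R]_nh)
  : 'rV[R]_rbm_dim := row_mx (row_mx (mxvec W) bv) bh.

Definition rbm_Lambda (psiW psib : R) : 'M[R]_rbm_dim :=
  diag_mx (row_mx (row_mx (const_mx psiW : 'rV[R]_(nv * nh))
                          (const_mx psib : 'rV[R]_nv))
                  (const_mx psib : 'rV[R]_nh)).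

Definition l2norm (n : nat) (x : 'rV[R]_n) : R :=
  Num.sqrt (\sum_(i < n) x 0 i ^+ 2).

(* CD gradient estimate: data statistics (minibatch of size B) minus
   negative-phase (model) statistics (M chains). *)
Definition cd_grad (B M : nat)
  (vd : 'I_B -> 'rV[R]_nv) (hd : 'I_B -> 'rV[R]_nh)
  (vm : 'I_M -> 'rV[R]_nv) (hm : 'I_M -> 'rV[R]_nh) : 'rV[R]_rbm_dim :=
  rbm_vec
    ((B%:R)^-1 *: \sum_(k < B) ((vd k)^T *m hd k)
       - (M%:R)^-1 *: \sum_(k < M) ((vm k)^T *m hm k))
    ((B%:R)^-1 *: \sum_(k < B) vd k - (M%:R)^-1 *: \sum_(k < M) vm k)
    ((B%:R)^-1 *: \sum_(k < B) hd k - (M%:R)^-1 *: \sum_(k < M) hm k).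

Definition binary_vec (n : nat) (v : 'rV[R]_n) : Prop :=
  forall i, v 0 i = 0 \/ v 0 i = 1.

Definition unit_vec (n : nat) (h : 'rV[R]_n) : Prop :=
  forall j, 0 <= h 0 j <= 1.

End RBM.

(* Main.v *)
Require Import Defs.
From HB Require Import structures.
From mathcomp Require Import all_boot all_order all_algebra.
From mathcomp Require Import reals.
From mathcomp Require Import ring lra.
Import Order.TTheory GRing.Theory Num.Theory.
Local Open Scope ring_scope.

Lemma row_mx_coord (R : Type) (P : R -> Prop) (m n : nat) (a : 'rV[R]_m) (b : 'rV[R]_n) :
  (forall j, P (a 0 j)) -> (forall j, P (b 0 j)) -> forall k, P (row_mx a b 0 k).
Proof.
move=> Ha Hb k; rewrite /row_mx mxE; case: (split k) => j; [exact: Ha|exact: Hb].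
Qed.

Lemma rbm_vec_coord (R : realType) nv nh (P : R -> Prop) (A : 'M[R]_(nv,nh)) (b : 'rV[R]_nv) (c : 'rV[R]_nh) :
  (forall i j, P (A i j)) -> (forall j, P (b 0 j)) -> (forall j, P (c 0 j)) ->
  forall k, P (rbm_vec A b c 0 k).
Proof.
move=> HA Hb Hc k; rewrite /rbm_vec.
apply: row_mx_coord Hc k; apply: row_mx_coord Hb => j.
case/mxvec_indexP: j => i j; rewrite mxvecE; exact: HA.
Qed.

Lemma avg01 (R : realType) (B : nat) (F : 'I_B -> R) :
  (0 < B)%N -> (forall k, 0 <= F k <= 1) ->
  0 <= (B%:R)^-1 * \sum_(k < B) F k <= 1.
Proof.
move=> B0 HF.
have Bp : (0 : R) < B%:R by rewrite ltr0n.
have s0 : 0 <= \sum_(k < B) F k by apply: sumr_ge0 => k _; case/andP: (HF k).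
have s1 : \sum_(k < B) F k <= B%:R.
  have -> : (B%:R : R) = \sum_(k < B) 1 by rewrite sumr_const card_ord.
  by apply: ler_sum => k _; case/andP: (HF k).
apply/andP; split; first by apply: mulr_ge0 => //; rewrite invr_ge0 ltW.
by rewrite ler_pdivrMl // mulr1.
Qed.

Lemma dif1 (R : realType) (a b : R) : 0 <= a <= 1 -> 0 <= b <= 1 -> `|a - b| <= 1.
Proof.
move=> /andP[a0 a1] /andP[b0 b1]; rewrite ler_norml; apply/andP; split; lra.
Qed.

Lemma grad_bound (R : realType) nv nh B M
  (vd : 'I_B -> 'rV[R]_nv) (hd : 'I_B -> 'rV[R]_nh)
  (vm : 'I_M -> 'rV[R]_nv) (hm : 'I_M -> 'rV[R]_nh) :
  (0 < B)%N -> (0 < M)%N ->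
  (forall k, binary_vec (vd k)) -> (forall k, binary_vec (vm k)) ->
  (forall k, unit_vec (hd k)) -> (forall k, unit_vec (hm k)) ->
  forall i, `|cd_grad vd hd vm hm 0 i| <= 1.
Proof.
move=> B0 M0 Hvd Hvm Hhd Hhm.
have bin01 : forall n (v : 'rV[R]_n), binary_vec v -> forall j, 0 <= v 0 j <= 1.
  by move=> n v Hv j; case: (Hv j) => ->; rewrite ?lexx ?ler01.
apply: (@rbm_vec_coord R nv nh (fun x : R => `|x| <= 1)) => [i j|j|j]; rewrite !mxE !summxE; apply: dif1; apply: avg01 => // k.
- rewrite !mxE big_ord1 !mxE.
  case/andP: (bin01 _ _ (Hvd k) i) => ? ?; case/andP: (Hhd k j) => ? ?.
  apply/andP; split; first exact: mulr_ge0. nra.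
- rewrite !mxE big_ord1 !mxE.
  case/andP: (bin01 _ _ (Hvm k) i) => ? ?; case/andP: (Hhm k j) => ? ?.
  apply/andP; split; first exact: mulr_ge0. nra.
- exact: bin01.
- exact: bin01.
- exact: Hhd.
- exact: Hhm.
Qed.

Theorem theorem4 (R : realType) (nv nh B M : nat) (psiW psib eta : R)
  (theta : nat -> 'rV[R]_(rbm_dim nv nh))
  (vd : nat -> 'I_B -> 'rV[R]_nv) (hd : nat -> 'I_B -> 'rV[R]_nh)
  (vm : nat -> 'I_M -> 'rV[R]_nv) (hm : nat -> 'I_M -> 'rV[R]_nh) :
  (0 < B)%N -> (0 < M)%N ->
  0 < psiW -> 0 < psib ->
  0 < eta * Num.max psiW psib < 2 ->
  (forall t k, binary_vec (vd t k)) ->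
  (forall t k, binary_vec (vm t k)) ->
  (forall t k, unit_vec (hd t k)) ->
  (forall t k, unit_vec (hm t k)) ->
  (forall t, theta t.+1 =
     theta t + eta *: (cd_grad (vd t) (hd t) (vm t) (hm t)
                       - theta t *m rbm_Lambda nv nh psiW psib)) ->
  exists C : R, forall t, l2norm (theta t) <= C.
Proof.
move=> B0 M0 pW pb /andP[e0 e2] Hvd Hvm Hhd Hhm Hrec.
set q := Num.max `|1 - eta * psiW| `|1 - eta * psib|.
have etap : 0 < eta.
  have mp : 0 < Num.max psiW psib by rewrite lt_max pW.
  by rewrite -(pmulr_lgt0 _ mp).
have hW : eta * psiW <= eta * Num.max psiW psib by rewrite ler_pM2l // le_max lexx.
have hb : eta * psib <= eta * Num.max psiW psib by rewrite ler_pM2l // le_max lexx orbT.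
have q1 : q < 1.
  rewrite gt_max !ltr_norml; apply/andP; split; apply/andP; split.
  - have : 0 < eta * psiW by apply: mulr_gt0. lra.
  - have : 0 < eta * psiW by apply: mulr_gt0. lra.
  - have : 0 < eta * psib by apply: mulr_gt0. lra.
  - have : 0 < eta * psib by apply: mulr_gt0. lra.
have q0 : 0 <= q by rewrite le_max normr_ge0.
set d := row_mx (row_mx (const_mx psiW : 'rV[R]_(nv * nh))
                          (const_mx psib : 'rV[R]_nv))
                  (const_mx psib : 'rV[R]_nh).
have lam : forall i, d 0 i = psiW \/ d 0 i = psib.
  move=> i; apply: (@row_mx_coord R (fun x => x = psiW \/ x = psib)) => j; last by rewrite mxE; right.
  by apply: (@row_mx_coord R (fun x => x = psiW \/ x = psib)) => j'; rewrite mxE; [left|right].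
have coord : forall t i, `|theta t.+1 0 i| <= q * `|theta t 0 i| + eta.
  move=> t i; rewrite Hrec /rbm_Lambda -/d mul_mx_diag.
  have gb : `|cd_grad (vd t) (hd t) (vm t) (hm t) 0 i| <= 1 by apply: grad_bound.
  move: gb; set G := cd_grad _ _ _ _ => gb.
  have -> : (theta t + eta *: (G - \matrix_(i0, j) (theta t i0 j * d 0 j))) 0 i
     = theta t 0 i + eta * (G 0 i - theta t 0 i * d 0 i) by rewrite !mxE.
  set g := G 0 i.
  set x := theta t 0 i.
  have -> : x + eta * (g - x * d 0 i) = (1 - eta * d 0 i) * x + eta * g by ring.
  have hq : `|1 - eta * d 0 i| <= q.
    by case: (lam i) => ->; rewrite le_max lexx ?orbT.
  apply: (le_trans (ler_normD _ _)); rewrite !normrM (gtr0_norm etap).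
  apply: lerD; first by apply: ler_wpM2r => //; exact: normr_ge0.
  by rewrite -[X in _ <= X]mulr1 ler_wpM2l // ltW.
pose K i := Num.max `|theta 0%N 0 i| (eta / (1 - q)).
have Kb : forall t i, `|theta t 0 i| <= K i.
  move=> t i; elim: t => [|t IH]; first by rewrite le_max lexx.
  apply: (le_trans (coord t i)).
  have h1 : eta / (1 - q) <= K i by rewrite le_max lexx orbT.
  have qp : 0 < 1 - q by lra.
  have h2 : eta <= (1 - q) * K i by rewrite -ler_pdivrMl //; rewrite mulrC.
  have : q * `|theta t 0 i| <= q * K i by rewrite ler_wpM2l.
  lra.
exists (Num.sqrt (\sum_i K i ^+ 2)) => t; rewrite /l2norm.
apply: ler_wsqrtr; apply: ler_sum => i _.
have := Kb t i; rewrite ler_norml => /andP[a b].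
nra.
Qed.
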